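(* Let $n\ge2$ and $0<c\le\frac1{\sqrt n}$. Set $\delta=\frac1n+\frac{\sqrt{(n-1)(c^2-c^4)}}{n(c^2-1)}$. Then $0\le\delta<\frac1n$, and with $B=I-\delta e^{n\times n}$ having columns $b_1,\dots,b_n$ and $\alpha=\frac1{\sqrt{\delta^2n-2\delta+1}}$, the set $\{\alpha b_1,\dots,\alpha b_n,-\alpha b_1,\dots,-\alpha b_n\}$ is a positive basis of $\mathbb R^n$ with cosine measure $c$.
   Context: $e^{n\times n}$ is the $n\times n$ all-ones matrix. A finite set $\mathcal P$ is a positive basis if its positive span $\{\sum\lambda_id_i:\lambda_i\ge0\}$ is $\mathbb R^n$ and no $d\in\mathcal P$ lies in the positive span of $\mathcal P\setminus\{d\}$. The cosine measure of a finite $\mathcal S\subset\mathbb R^n\setminus\{\mathbf 0\}$ is $\min_{\|u\|=1}\max_{d\in\mathcal S}\frac{d^\top u}{\|d\|}$. *)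

(* Defs.v *)
From HB Require Import structures.
From mathcomp Require Import all_boot all_order all_algebra.
From mathcomp Require Import reals.
Set Implicit Arguments. Unset Strict Implicit. Unset Printing Implicit Defensive.
Import Order.TTheory GRing.Theory Num.Theory.
Local Open Scope ring_scope.

Section Defs.
Variables (R : realType) (n : nat).

Definition dotv (u v : 'cV[R]_n) : R := (u^T *m v) 0 0.
Definition normv (u : 'cV[R]_n) : R := Num.sqrt (dotv u u).

Definition ones_mx : 'M[R]_n := const_mx 1.

Definition in_pspan (s : seq 'cV[R]_n) (v : 'cV[R]_n) : Prop :=
  exists lam : 'I_(size s) -> R,
    (forall i, 0 <= lam i) /\ v = \sum_(i < size s) lam i *: s`_i.

Definition positive_basis (P : seq 'cV[R]_n) : Prop :=
  (forall v : 'cV[R]_n, in_pspan P v) /\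
  (forall d, d \in P -> ~ in_pspan [seq x <- P | x != d] d).

Definition cos_max (S : seq 'cV[R]_n) (u : 'cV[R]_n) : R :=
  \big[Num.max/(dotv (head 0 S) u / normv (head 0 S))]_(d <- S) (dotv d u / normv d).

Definition has_cosine_measure (S : seq 'cV[R]_n) (c : R) : Prop :=
  S != [::] /\ (forall d, d \in S -> d != 0) /\
  (exists u : 'cV[R]_n, normv u = 1 /\ cos_max S u = c) /\
  (forall u : 'cV[R]_n, normv u = 1 -> c <= cos_max S u).

End Defs.

(* Main.v *)
Require Import Defs.
From HB Require Import structures.
From mathcomp Require Import all_boot all_order all_algebra.
From mathcomp Require Import reals.
From mathcomp Require Import lra ring.
Set Implicit Arguments. Unset Strict Implicit. Unset Printing Implicit Defensive.
Import Order.TTheory GRing.Theory Num.Theory.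
Local Open Scope ring_scope.

Section Gen.
Variables (R : realType) (n : nat) (delta alpha : R).

Definition sigv (u : 'cV[R]_n) : R := \sum_k u k 0.

Lemma dotvE (u v : 'cV[R]_n) : dotv u v = \sum_k u k 0 * v k 0.
Proof. by rewrite /dotv !mxE; apply: eq_bigr => k _; rewrite !mxE. Qed.

Lemma dotvNl (u v : 'cV[R]_n) : dotv (- u) v = - dotv u v.
Proof. rewrite !dotvE -sumrN; apply: eq_bigr => k _; rewrite !mxE; ring. Qed.

Lemma dotv_sumr I (r : seq I) (P : pred I) (F : I -> 'cV[R]_n) (lam : I -> R) (u : 'cV[R]_n) :
  dotv u (\sum_(i <- r | P i) lam i *: F i) = \sum_(i <- r | P i) lam i * dotv u (F i).
Proof.
rewrite dotvE; under eq_bigr => k _ do rewrite summxE mulr_sumr.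
rewrite exchange_big /=; apply: eq_bigr => i _.
rewrite dotvE mulr_sumr; apply: eq_bigr => k _; rewrite !mxE; ring.
Qed.

Lemma sum_delta (i : 'I_n) (f : 'I_n -> R) : \sum_k (k == i)%:R * f k = f i.
Proof.
rewrite (bigD1 i) //= eqxx mul1r big1 ?addr0 // => k /negPf ->; by rewrite mul0r.
Qed.

Definition B := 1%:M - delta *: ones_mx R n.
Definition av (i : 'I_n) : 'cV[R]_n := alpha *: col i B.

Lemma avE i k : av i k 0 = alpha * ((k == i)%:R - delta).
Proof. by rewrite !mxE mulr1. Qed.

Lemma dot_avl i u : dotv (av i) u = alpha * (u i 0 - delta * sigv u).
Proof.
rewrite dotvE.
transitivity (alpha * (\sum_k (k == i)%:R * u k 0 - delta * \sum_k u k 0)).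
  rewrite mulrBr !mulr_sumr -sumrB; apply: eq_bigr => k _.
  rewrite avE; ring.
by rewrite sum_delta.
Qed.

Lemma sig_av i : sigv (av i) = alpha * (1 - n%:R * delta).
Proof.
rewrite /sigv. under eq_bigr => k _ do rewrite avE.
rewrite -mulr_sumr sumrB sumr_const card_ord.
have -> : \sum_(k < n) (k == i)%:R = 1 :> R.
  by rewrite -[RHS](sum_delta i (fun _ => 1)); apply: eq_bigr => k _; rewrite mulr1.
by rewrite mulr_natl.
Qed.


Lemma dotvNN (u v : 'cV[R]_n) : dotv (- u) (- v) = dotv u v.
Proof. rewrite !dotvE; apply: eq_bigr => k _; rewrite !mxE; ring. Qed.

Lemma dot_av_av i : dotv (av i) (av i) = alpha^+2 * (delta^+2 * n%:R - 2 * delta + 1).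
Proof. rewrite dot_avl sig_av avE eqxx mulr1n; ring. Qed.

Lemma lower (c M : R) (u : 'cV[R]_n) : (0 < n)%N -> 0 <= delta -> n%:R * delta < 1 -> 0 < alpha ->
  c ^+ 2 * n%:R = alpha ^+ 2 * (1 - n%:R * delta) ^+ 2 -> 0 < c ->
  dotv u u = 1 -> (forall i, `|dotv (av i) u| <= M) -> c <= M.
Proof.
move=> n0 d0 nd a0 hc c0 uu hM.
set D := 1 - n%:R * delta. have D0 : 0 < D by rewrite subr_gt0.
set s := sigv u.
pose w := fun i => u i 0 - delta * s.
have hw i : alpha * `|w i| <= M.
  by have := hM i; rewrite dot_avl normrM gtr0_norm.
have sw : \sum_i w i = s * D.
  rewrite /w sumrB sumr_const card_ord -mulr_natl /s /sigv /D; ring.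
have sabs : alpha * \sum_i `|w i| <= n%:R * M.
  rewrite mulr_sumr; apply: le_trans (ler_sum _ (fun i _ => hw i)) _.
  by rewrite sumr_const card_ord mulr_natl.
have hu i : `|alpha * D * u i 0| <= M.
  have -> : alpha * D * u i 0 = alpha * D * w i + alpha * delta * \sum_j w j.
    by rewrite sw /w; ring.
  apply: le_trans (ler_normD _ _) _.
  rewrite !normrM (gtr0_norm a0) (gtr0_norm D0) (ger0_norm d0).
  have h1 : alpha * D * `|w i| <= D * M.
    have := hw i; nra.
  have h3 := ler_norm_sum (index_enum 'I_n) w predT.
  have h2 : alpha * delta * `|\sum_j w j| <= delta * (n%:R * M).
    have ha : 0 <= alpha * delta by rewrite mulr_ge0 // ltW.
    nra.
  have : D * M + delta * (n%:R * M) = M by rewrite /D; ring.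
  lra.
have hsq : alpha^+2 * D^+2 <= n%:R * M^+2.
  have <- : \sum_i (alpha * D * u i 0)^+2 = alpha^+2 * D^+2.
    rewrite -[RHS]mulr1 -uu dotvE mulr_sumr; apply: eq_bigr => i _; ring.
  have hi : forall i : 'I_n, true -> (alpha * D * u i 0)^+2 <= M^+2.
    move=> i _; rewrite -real_normK ?num_real //.
    have := hu i; have := normr_ge0 (alpha * D * u i 0); nra.
  apply: le_trans (ler_sum _ hi) _.
  by rewrite sumr_const card_ord mulr_natl.
have M0 : 0 <= M by apply: le_trans (normr_ge0 _) (hM (Ordinal n0)).
have nR : 0 < n%:R :> R by rewrite ltr0n.
have : c^+2 <= M^+2.
  rewrite -(ler_pM2r nR) hc [M^+2 * _]mulrC; exact: hsq.
nra.
Qed.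


Lemma dotvC (u v : 'cV[R]_n) : dotv u v = dotv v u.
Proof. rewrite !dotvE; apply: eq_bigr => k _; ring. Qed.

Definition solv (v : 'cV[R]_n) : 'cV[R]_n :=
  \col_k ((v k 0 + delta / (1 - n%:R * delta) * sigv v) / alpha).

Lemma solv_prop v k : alpha != 0 -> 1 - n%:R * delta != 0 ->
  alpha * (solv v k 0 - delta * sigv (solv v)) = v k 0.
Proof.
move=> a0 D0.
have -> : sigv (solv v) = (sigv v + n%:R * (delta / (1 - n%:R * delta) * sigv v)) / alpha.
  rewrite /sigv; under eq_bigr => i _ do rewrite mxE.
  by rewrite -mulr_suml big_split /= sumr_const card_ord /sigv; ring.
rewrite /solv mxE; field; by rewrite a0 D0.
Qed.

Lemma sum_avE (x : 'I_n -> R) j :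
  (\sum_k x k *: av k) j 0 = alpha * (x j - delta * \sum_k x k).
Proof.
rewrite summxE.
under eq_bigr => k _ do rewrite mxE avE.
transitivity (alpha * (\sum_k (k == j)%:R * x k - delta * \sum_k x k)).
  rewrite mulrBr !mulr_sumr -sumrB; apply: eq_bigr => k _.
  rewrite (eq_sym k j); case: (j == k) => /=; ring.
by rewrite sum_delta.
Qed.

End Gen.

Section Big.
Variables (R : realType) (T : eqType).

Lemma bigmax_ge (s : seq T) (f : T -> R) x0 d : d \in s ->
  f d <= \big[Num.max/x0]_(e <- s) f e.
Proof.
elim: s => // a s IH; rewrite inE big_cons => /orP [/eqP -> | /IH h].
  by rewrite le_max lexx.
by rewrite le_max h orbT.
Qed.

Lemma bigmax_le (s : seq T) (f : T -> R) x0 M : x0 <= M ->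
  (forall d, d \in s -> f d <= M) -> \big[Num.max/x0]_(e <- s) f e <= M.
Proof.
move=> h0; elim: s => [|a s IH] h; first by rewrite big_nil.
rewrite big_cons ge_max h ?mem_head //= IH // => d hd.
by apply: h; rewrite inE hd orbT.
Qed.

End Big.

Lemma bigmax_le' (R : realType) (T : eqType) (s : seq T) (f : T -> R) x M : s != [::] ->
  (forall d, d \in s -> f d <= M) -> \big[Num.max/f (head x s)]_(e <- s) f e <= M.
Proof.
move=> hs h; apply: bigmax_le => //; apply: h.
by case: s hs => //= a s _; rewrite mem_head.
Qed.

Lemma pspan_nat (R : realType) n (s : seq 'cV[R]_n) v (l : nat -> R) :
  (forall k, 0 <= l k) -> v = \sum_(0 <= k < size s) l k *: s`_k -> in_pspan s v.
Proof. by move=> h1 h2; exists (fun i => l i); split => //; rewrite h2 big_mkord. Qed.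

Lemma not_pspan (R : realType) n (P : seq 'cV[R]_n) d y :
  0 < dotv y d -> (forall x, x \in P -> dotv y x <= 0) -> ~ in_pspan P d.
Proof.
move=> h1 h2 [lam [hl hd]]; move: h1; rewrite hd dotv_sumr.
have : \sum_(i < size P) lam i * dotv y P`_i <= 0.
  apply: sumr_le0 => i _; apply: mulr_ge0_le0 => //; apply: h2.
  exact: mem_nth.
by move=> h3 h4; have := lt_le_trans h4 h3; rewrite ltxx.
Qed.

Lemma maxdiff (R : realType) (x : R) : Num.max x 0 - Num.max (- x) 0 = x.
Proof.
have [h|h] := leP 0 x.
  by rewrite (max_r (_ : - x <= 0)) ?subr0 // oppr_le0.
  by rewrite (max_l (_ : 0 <= - x)) ?opprK ?add0r // oppr_ge0 ltW.
Qed.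

Lemma size_seq_ord (T : Type) n (f : 'I_n -> T) : size [seq f i | i <- enum 'I_n] = n.
Proof. by rewrite size_map size_enum_ord. Qed.

Lemma nth_seq_ord (T : Type) n (f : 'I_n -> T) x0 (k : 'I_n) :
  nth x0 [seq f i | i <- enum 'I_n] k = f k.
Proof. by rewrite (nth_map k) ?size_enum_ord // nth_ord_enum. Qed.

Section Main.
Variables (R : realType) (n : nat) (delta alpha c : R).

Definition Sq : seq 'cV[R]_n :=
  [seq av delta alpha i | i <- enum 'I_n] ++ [seq - av delta alpha i | i <- enum 'I_n].

Lemma memS d : d \in Sq -> exists i, d = av delta alpha i \/ d = - av delta alpha i.
Proof.
by rewrite mem_cat => /orP [/mapP [i _ ->] | /mapP [i _ ->]]; exists i; [left|right].
Qed.

Lemma avS i : av delta alpha i \in Sq.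
Proof. by rewrite mem_cat; apply/orP; left; apply: map_f; rewrite mem_enum. Qed.

Lemma NavS i : - av delta alpha i \in Sq.
Proof. by rewrite mem_cat; apply/orP; right; apply: map_f; rewrite mem_enum. Qed.

Hypotheses (n0 : (0 < n)%N) (d0 : 0 <= delta) (nd : n%:R * delta < 1) (a0 : 0 < alpha)
  (hq : alpha ^+ 2 * (delta ^+ 2 * n%:R - 2 * delta + 1) = 1) (c0 : 0 < c)
  (hc : c = alpha * (1 - n%:R * delta) / Num.sqrt n%:R).

Lemma normS d : d \in Sq -> normv d = 1.
Proof.
case/memS => i [] ->; rewrite /normv ?dotvNN dot_av_av hq sqrtr1 //.
Qed.

Lemma spanS v : in_pspan Sq v.
Proof.
have aN : alpha != 0 by rewrite gt_eqF.
have DN : 1 - n%:R * delta != 0 by rewrite gt_eqF // subr_gt0.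
pose i0 : 'I_n := Ordinal n0.
pose x := fun k : 'I_n => solv delta alpha v k 0.
have hv : v = \sum_k x k *: av delta alpha k.
  apply/matrixP => j l; rewrite ord1 sum_avE -(solv_prop v j aN DN) /x.
  by congr (_ * (_ - _ * _)).
pose xn := fun k : nat => x (insubd i0 k).
have xnE (k : 'I_n) : xn k = x k.
  by rewrite /xn; congr x; apply: val_inj; rewrite val_insubd ltn_ord.
pose l := fun k : nat => if (k < n)%N then Num.max (xn k) 0 else Num.max (- xn (k - n)%N) 0.
have szS : size Sq = (n + n)%N by rewrite /Sq size_cat !size_seq_ord.
apply: (@pspan_nat R n Sq v l).
  by move=> k; rewrite /l; case: ifP => _; rewrite le_max lexx orbT.
rewrite szS {1}hv big_mkord big_split_ord /= -big_split.
apply: eq_bigr => k _.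
rewrite /Sq !nth_cat !size_seq_ord /l.
rewrite ltn_ord ltnNge leq_addr addKn /= !nth_seq_ord xnE.
by rewrite scalerN -scalerBl maxdiff.
Qed.


Lemma indepS d : d \in Sq -> ~ in_pspan [seq x <- Sq | x != d] d.
Proof.
have aN : alpha != 0 by rewrite gt_eqF.
have DN : 1 - n%:R * delta != 0 by rewrite gt_eqF // subr_gt0.
case/memS => j hd.
pose y0 := solv delta alpha (delta_mx j 0 : 'cV[R]_n).
have hy k : dotv y0 (av delta alpha k) = (k == j)%:R.
  by rewrite dotvC dot_avl solv_prop // mxE eqxx andbT.
case: hd => ->.
- apply: (not_pspan (y := y0)); first by rewrite hy eqxx ltr01.
  move=> x; rewrite mem_filter => /andP [hx /memS [k [] hk]]; subst x.
    by rewrite hy; case: eqP => // hk; move: hx; rewrite hk eqxx.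
  by rewrite dotvC dotvNl dotvC hy oppr_le0.
- apply: (not_pspan (y := - y0)).
    by rewrite dotvNN hy eqxx ltr01.
  move=> x; rewrite mem_filter => /andP [hx /memS [k [] hk]]; subst x.
    by rewrite dotvNl hy oppr_le0.
  by rewrite dotvNN hy; case: eqP => // hk; move: hx; rewrite hk eqxx.
Qed.

Lemma pbS : positive_basis Sq.
Proof. split; [exact: spanS | exact: indepS]. Qed.

Lemma dotvu0 (u : 'cV[R]_n) : 0 <= dotv u u.
Proof. by rewrite dotvE; apply: sumr_ge0 => k _; rewrite -expr2 sqr_ge0. Qed.

Lemma cmS : has_cosine_measure Sq c.
Proof.
pose i0 : 'I_n := Ordinal n0.
have Sn : Sq != [::] by apply/eqP => hS; have := avS i0; rewrite hS in_nil.
have sn0 : 0 < Num.sqrt n%:R :> R by rewrite sqrtr_gt0 ltr0n.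
have hsn : Num.sqrt n%:R ^+ 2 = n%:R :> R by rewrite sqr_sqrtr ?ler0n.
move: hc sn0 hsn; set s := Num.sqrt n%:R => hcs sns hss.
split; first exact: Sn.
split.
  move=> d hd; apply/eqP => h; have := normS hd.
  rewrite h /normv dotvE big1 ?sqrtr0 => [/eqP|k _]; first by rewrite eq_sym oner_eq0.
  by rewrite mxE mul0r.
have cosE u d : d \in Sq -> dotv d u / normv d = dotv d u.
  by move=> hd; rewrite normS // divr1.
split.
  pose u0 : 'cV[R]_n := const_mx (1 / s).
  have su0 : sigv u0 = n%:R / s.
    rewrite /sigv; under eq_bigr => k _ do rewrite mxE.
    by rewrite sumr_const card_ord -mulrnAl.
  have hav i : dotv (av delta alpha i) u0 = c.
    rewrite dot_avl su0 mxE hcs; ring.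
  exists u0; split.
    rewrite /normv dotvE; under eq_bigr => k _ do rewrite mxE.
    rewrite sumr_const card_ord -mulr_natl -hss.
    have -> : s ^+ 2 * (1 / s * (1 / s)) = 1.
      by field; rewrite gt_eqF.
    by rewrite sqrtr1.
  apply/eqP; rewrite eq_le; apply/andP; split.
    apply: bigmax_le' => // d hd; rewrite cosE //.
    case/memS: hd => i [] ->; rewrite ?dotvNl hav //.
    by have := c0; lra.
  have := bigmax_ge (fun d => dotv d u0 / normv d)
    (dotv (head 0 Sq) u0 / normv (head 0 Sq)) (avS i0).
  by rewrite /= cosE ?avS // hav.
move=> u hu.
have uu : dotv u u = 1.
  by rewrite -(sqr_sqrtr (dotvu0 u)); move: hu; rewrite /normv => ->; rewrite expr1n.
apply: (lower (delta := delta) (alpha := alpha) (u := u) n0 d0 nd a0 _ c0 uu).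
  rewrite hcs expr_div_n hss; field; by rewrite gt_eqF // ltr0n.
move=> i; rewrite ler_norml; apply/andP; split.
  rewrite lerNl -dotvNl -(cosE u) ?NavS //.
  exact: (bigmax_ge (fun d => dotv d u / normv d)) (NavS i).
rewrite -(cosE u) ?avS //.
exact: (bigmax_ge (fun d => dotv d u / normv d)) (avS i).
Qed.

End Main.

Theorem corollary3 (R : realType) (n : nat) (c : R) :
  (2 <= n)%N -> 0 < c -> c <= 1 / Num.sqrt (n%:R) ->
  let delta : R := 1 / n%:R +
      Num.sqrt ((n%:R - 1) * (c ^+ 2 - c ^+ 4)) / (n%:R * (c ^+ 2 - 1)) in
  let B : 'M[R]_n := 1%:M - delta *: ones_mx R n in
  let alpha : R := 1 / Num.sqrt (delta ^+ 2 * n%:R - 2 * delta + 1) in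
  let S : seq 'cV[R]_n :=
      [seq alpha *: col i B | i <- enum 'I_n] ++
      [seq - (alpha *: col i B) | i <- enum 'I_n] in
  (0 <= delta /\ delta < 1 / n%:R) /\
  positive_basis S /\ has_cosine_measure S c.
Proof.
move=> n2 c0 cle delta B alpha S.
have n0 : (0 < n)%N by apply: leq_trans n2.
have hN : 2 <= n%:R :> R by rewrite (ler_nat R 2 n).
have sn0 : 0 < Num.sqrt n%:R :> R by rewrite sqrtr_gt0; lra.
have hsn : Num.sqrt n%:R ^+ 2 = n%:R :> R by rewrite sqr_sqrtr //; lra.
have hc1 : c * Num.sqrt n%:R <= 1 by rewrite -ler_pdivlMr.
have hc2 : c ^+ 2 * n%:R <= 1.
  rewrite -hsn; have := mulr_gt0 c0 sn0; nra.
have c21 : c ^+ 2 < 1 by nra.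
have c2p : 0 < c ^+ 2 by rewrite exprn_gt0.
set r := Num.sqrt ((n%:R - 1) * (c ^+ 2 - c ^+ 4)).
have arg0 : 0 < (n%:R - 1) * (c ^+ 2 - c ^+ 4).
  apply: mulr_gt0; first lra.
  have -> : c ^+ 4 = c ^+ 2 * c ^+ 2 by rewrite -exprD.
  nra.
have hr : r ^+ 2 = (n%:R - 1) * (c ^+ 2 - c ^+ 4) by rewrite sqr_sqrtr // ltW.
have r0 : 0 < r by rewrite sqrtr_gt0.
have c4 : c ^+ 4 = c ^+ 2 * c ^+ 2 by rewrite -exprD.
set t := r / (1 - c ^+ 2).
have htr : t * (1 - c ^+ 2) = r by rewrite /t divfK // gt_eqF // subr_gt0.
have t0 : 0 < t by rewrite /t divr_gt0 // subr_gt0.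
have ht2 : t ^+ 2 * (1 - c ^+ 2) = (n%:R - 1) * c ^+ 2.
  apply: (@mulIf _ (1 - c ^+ 2)); first by rewrite gt_eqF // subr_gt0.
  have e : (t * (1 - c ^+ 2)) ^+ 2 = r ^+ 2 by rewrite htr.
  rewrite hr c4 in e; move: e; set a := c ^+ 2; move=> e.
  apply: (etrans (_ : _ = (t * (1 - a)) ^+ 2)); first ring.
  rewrite e; ring.
have t1 : t <= 1.
  have : (t - 1) * (1 - c ^+ 2) * (t + 1) <= 0.
    have -> : (t - 1) * (1 - c ^+ 2) * (t + 1) = t ^+ 2 * (1 - c ^+ 2) - (1 - c ^+ 2) by ring.
    rewrite ht2; nra.
  nra.
have NN : n%:R != 0 :> R by apply/eqP; lra.
have hd : delta = (1 - t) / n%:R.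
  rewrite /delta -/r /t; field.
  by rewrite NN /= !subr_eq0; apply/andP; split; apply/eqP => h; lra.
have hq : delta ^+ 2 * n%:R - 2 * delta + 1 = (t ^+ 2 + n%:R - 1) / n%:R.
  by rewrite hd; field.
have q0 : 0 < (t ^+ 2 + n%:R - 1) / n%:R by apply: divr_gt0; nra; lra.
have a0 : 0 < alpha by rewrite /alpha hq divr_gt0 // sqrtr_gt0.
have ha2 : alpha ^+ 2 * (delta ^+ 2 * n%:R - 2 * delta + 1) = 1.
  rewrite /alpha hq expr_div_n sqr_sqrtr ?ltW // expr1n; field.
  by rewrite NN /=; apply/eqP => h; nra.
have nd : n%:R * delta < 1 by rewrite hd mulrC divfK //; lra.
have d0 : 0 <= delta by rewrite hd divr_ge0; lra.
have hcc : c = alpha * (1 - n%:R * delta) / Num.sqrt n%:R.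
  have hD : 1 - n%:R * delta = t by rewrite hd mulrC divfK //; ring.
  rewrite hD.
  have y0 : 0 < alpha * t / Num.sqrt n%:R by rewrite divr_gt0 // mulr_gt0.
  have : c ^+ 2 = (alpha * t / Num.sqrt n%:R) ^+ 2.
    rewrite expr_div_n exprMn hsn /alpha hq expr_div_n sqr_sqrtr ?ltW // expr1n.
    apply: (@mulIf _ ((t ^+ 2 + n%:R - 1))); first by apply/eqP => h; nra.
    rewrite [RHS](_ : _ = t ^+ 2); last by field; rewrite NN /=; apply/eqP => h; nra.
    nra.
  move=> /eqP; rewrite eqrXn2 // ?ltW // => /eqP.
  done.
split.
  split => //; rewrite hd ltr_pM2r ?invr_gt0; lra.
split.
  exact: (pbS n0 nd a0).
exact: (cmS n0 d0 nd a0 ha2 c0 hcc).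
Qed.
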